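(* Let $\underline a=\{a_i\}_{i\in I}$ be a pseudo-Cauchy sequence in $K$ of algebraic type and let $F,G$ be two distinct monic polynomials of smallest degree among polynomials not fixed by $\underline a$. Then $\mu_{F,\infty}\neq\mu_{G,\infty}$.
   Context: $(K,v)$ is a valued field. A pseudo-Cauchy sequence is $\underline a=\{a_i\}_{i\in I}\subseteq K$, $I$ well-ordered with at least two elements, $v(a_i-a_j)<v(a_j-a_k)$ for $i<j<k$. $I^*=I\setminus\{\max I\}$ if $I$ has a maximum, else $I^*=I$. $\gamma_i=v(a_{i+1}-a_i)$ and $\nu_i=v_{a_i,\gamma_i}$ for $i\in I^*$, with $v_{a,\gamma}(\sum_k b_k(x-a)^k)=\min_k\{v(b_k)+k\gamma\}$. A polynomial $f$ is fixed by $\underline a$ if $\{v(f(a_i))\}_{i\in I}$ is ultimately constant; $\underline a$ is of algebraic type if $I^*$ has no maximum and some polynomial is not fixed by $\underline a$. For $F$ monic of smallest degree not fixed by $\underline a$ and $g$ with $\deg g<\deg F$, $\nu_i(g)$ is ultimately constant; call this value $\nu_{\mathfrak v}(g)$. Then $\mu_{F,\infty}(f)=\min_{0\le j\le r}\{\nu_{\mathfrak v}(f_j)+j\cdot\infty\}$, i.e. $\mu_{F,\infty}(f)=\nu_{\mathfrak v}(f_0)$, where $f=\sum_{j=0}^r f_jF^j$ with $\deg f_j<\deg F$ is the $F$-expansion of $f$; it is a valuation on $K[x]$ with $\mu_{F,\infty}(F)=\infty$. *)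

(* Defs.v *)
From HB Require Import structures.
From mathcomp Require Import all_boot all_order all_algebra.
From Stdlib Require Import ClassicalEpsilon.
Set Implicit Arguments. Unset Strict Implicit. Unset Printing Implicit Defensive.
Import Order.TTheory GRing.Theory.
Local Open Scope ring_scope.

(* Value group Gamma: an abelian group (zmodType) with a relation leG;
   the extended value set Gamma u {oo} is [option Gamma], with None = oo. *)
Section ValuedField.
Variables (Gam : zmodType) (leG : rel Gam).

Definition ordered_abelian_group : Prop :=
  [/\ reflexive leG, transitive leG, antisymmetric leG, total leG &
      forall x y z, leG x y -> leG (x + z) (y + z)].

Definition leo (x y : option Gam) : bool :=
  match x, y with
  | _, None => true
  | None, Some _ => false
  | Some a, Some b => leG a b
  end.
Definition lto (x y : option Gam) : bool := leo x y && (x != y).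
Definition addo (x y : option Gam) : option Gam :=
  match x, y with Some a, Some b => Some (a + b) | _, _ => None end.
Definition mino (x y : option Gam) : option Gam := if leo x y then x else y.

Variable K : fieldType.

Definition is_valuation (v : K -> option Gam) : Prop :=
  [/\ forall x, v x = None <-> x = 0,
      forall x y, v (x * y) = addo (v x) (v y) &
      forall x y, leo (mino (v x) (v y)) (v (x + y))].

(* v_{a,gamma}(sum_k b_k (x-a)^k) = min_k (v(b_k) + k gamma) *)
Definition vag (v : K -> option Gam) (a : K) (gam : Gam) (f : {poly K}) : option Gam :=
  let b := f \Po ('X + a%:P) in
  \big[mino/None]_(k < size b) addo (v b`_k) (Some (gam *+ k)).

Variables (dI : Order.disp_t) (I : orderType dI).

Definition well_ordered : Prop :=
  forall P : I -> Prop, (exists i, P i) -> exists i, P i /\ forall j, P j -> (i <= j)%O.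

Variable v : K -> option Gam.
Variable a : I -> K.

Definition pseudo_cauchy : Prop :=
  (exists i j : I, i != j) /\
  forall i j k : I, (i < j)%O -> (j < k)%O -> lto (v (a i - a j)) (v (a j - a k)).

Definition inIstar (i : I) : Prop := ~ (forall j, (j <= i)%O).

Definition succI (i : I) : I :=
  epsilon (inhabits i) (fun j => (i < j)%O /\ forall k, (i < k)%O -> (j <= k)%O).

Definition gam_i (i : I) : option Gam := v (a (succI i) - a i).

(* nu_i = v_{a_i, gamma_i}; gamma_i is finite for all i in I^* in the
   algebraic-type case, the default 0 is never used there *)
Definition nu_i (i : I) : {poly K} -> option Gam := vag v (a i) (odflt 0 (gam_i i)).

Definition fixed (f : {poly K}) : Prop :=
  exists i0, forall i, (i0 <= i)%O -> v f.[a i] = v f.[a i0].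

Definition algebraic_type : Prop :=
  (forall i, inIstar i -> exists j, inIstar j /\ (i < j)%O) /\
  exists f, ~ fixed f.

Definition min_not_fixed (F : {poly K}) : Prop :=
  [/\ F \is monic, ~ fixed F & forall g, ~ fixed g -> (size F <= size g)%N].

Definition nu_v (g : {poly K}) : option Gam :=
  epsilon (inhabits None)
    (fun c => exists i0, inIstar i0 /\
       forall i, inIstar i -> (i0 <= i)%O -> nu_i i g = c).

(* mu_{F,oo}(f) = nu_v(f_0), f_0 = f mod F the 0-th coefficient of the F-expansion *)
Definition mu_inf (F : {poly K}) (f : {poly K}) : option Gam := nu_v (f %% F).

End ValuedField.

(* Main.v *)
Require Import Defs.
From HB Require Import structures.
From mathcomp Require Import all_boot all_order all_algebra.
From Stdlib Require Import ClassicalEpsilon Classical.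
From mathcomp Require Import zify.
Set Implicit Arguments. Unset Strict Implicit.
Import Order.TTheory GRing.Theory.
Local Open Scope ring_scope.

Section Aux.
Variables (Gam : zmodType) (leG : rel Gam) (K : fieldType)
  (v : K -> option Gam) (dI : Order.disp_t) (I : orderType dI) (a : I -> K).

Lemma vag_const (x : K) (gam : Gam) (c : K) : c != 0 ->
  vag leG v x gam c%:P = addo (v c) (Some 0).
Proof.
move=> c0; rewrite /vag comp_polyC size_polyC c0 big_ord_recl big_ord0 coefC /=.
by rewrite mulr0n; case: (addo _ _).
Qed.

Lemma vag_zero (x : K) (gam : Gam) : vag leG v x gam 0 = None.
Proof. by rewrite /vag comp_poly0 size_poly0 big_ord0. Qed.

Lemma nu_v_const (p : {poly K}) (c : option Gam) (i1 : I) : inIstar i1 ->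
  (forall i, inIstar i -> nu_i leG v a i p = c) -> nu_v leG v a p = c.
Proof.
move=> Hi1 H; rewrite /nu_v.
set P := (fun c0 => exists i0, inIstar i0 /\
       forall i, inIstar i -> (i0 <= i)%O -> nu_i leG v a i p = c0).
have HP : exists c0, P c0 by exists c, i1; split=> // i Hi _; exact: H.
have [i0 [Hi0 H0]] := epsilon_spec (inhabits None) P HP.
by rewrite -(H0 i0 Hi0 (lexx _)) H.
Qed.

Lemma fixed_const (c : K) (i : I) : fixed v a c%:P.
Proof. by exists i => j _; rewrite !hornerC. Qed.

Lemma fixed_mul (Hv : is_valuation leG v) (g h : {poly K}) :
  fixed v a g -> fixed v a h -> fixed v a (g * h).
Proof.
case: Hv => _ Hm _ [i1 H1] [i2 H2].
have [le12|le21] : (i1 <= i2)%O \/ (i2 <= i1)%O by apply/orP; exact: le_total.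
- exists i2 => j Hj; rewrite !hornerM !Hm H1 ?(le_trans le12) // H2 //.
  by rewrite H1.
- exists i1 => j Hj; rewrite !hornerM !Hm H2 ?(le_trans le21) // H1 //.
  by rewrite H2.
Qed.

Lemma min_div (Hv : is_valuation leG v) (i : I) (F q : {poly K}) :
  min_not_fixed v a F -> q %| F -> size q = 1%N \/ size q = size F.
Proof.
case=> Fm Fnf Fmin qF.
have F0 : F != 0 := monic_neq0 Fm.
have q0 : q != 0 by apply/negP=> /eqP q0; move: qF; rewrite q0 dvd0p (negbTE F0).
have sqF := dvdp_leq F0 qF.
case: (ltngtP (size q) 1) => [sq|sq|->]; last by left.
  by move: q0; rewrite -size_poly_gt0; case: (size q) sq.
case: (ltngtP (size q) (size F)) => [lt|gt|eq]; last by right.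
- exfalso; have qf : fixed v a q.
    by apply: NNPP => nf; move: (Fmin q nf); rewrite leqNgt lt.
  set r := F %/ q.
  have Fr : F = r * q by rewrite /r divpK.
  have r0 : r != 0 by apply/negP=> /eqP r0; move: F0; rewrite Fr r0 mul0r eqxx.
  have rf : fixed v a r.
    apply: NNPP => nf; move: (Fmin r nf); rewrite {1}Fr size_mul //.
    by move: sq; case: (size q) => [|[|k]] // _; rewrite !addnS /= ltnNge leq_addr.
  by apply: Fnf; rewrite Fr; apply: fixed_mul.
- by move: gt; rewrite ltnNge sqF.
Qed.
End Aux.

Theorem mainTheorem10 (Gam : zmodType) (leG : rel Gam) (K : fieldType)
  (v : K -> option Gam) (dI : Order.disp_t) (I : orderType dI) (a : I -> K)
  (F G : {poly K}) :
  ordered_abelian_group leG ->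
  is_valuation leG v ->
  well_ordered I ->
  pseudo_cauchy leG v a ->
  algebraic_type v a ->
  min_not_fixed v a F ->
  min_not_fixed v a G ->
  F != G ->
  mu_inf leG v a F <> mu_inf leG v a G.
Proof.
move=> _ Hv _ [[i [j ij]] _] _ HF HG FG.
have [i1 Hi1] : exists i1 : I, inIstar i1.
  have [lt|lt] : (i < j)%O \/ (j < i)%O.
    case/orP: (le_total i j) => h; [left|right]; rewrite lt_neqAle h andbT //.
    by rewrite eq_sym.
  - by exists i => H; move: (H j); rewrite leNgt lt.
  - by exists j => H; move: (H i); rewrite leNgt lt.
have sFG : size F = size G.
  case: HF HG => _ nF mF [_ nG mG]; apply/eqP; rewrite eqn_leq mF // mG //.
have cop : coprimep F G.
  rewrite /coprimep; apply/negPn/negP => Hn.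
  have [s1|sF] := min_div Hv i HF (dvdp_gcdl F G); first by rewrite s1 eqxx in Hn.
  have e1 : gcdp F G %= F by rewrite -dvdp_size_eqp ?dvdp_gcdl // sF.
  have e2 : gcdp F G %= G by rewrite -dvdp_size_eqp ?dvdp_gcdr // sF sFG.
  have : F %= G by rewrite -(eqp_ltrans e1) e2.
  by case: HF HG => mF _ _ [mG _ _]; rewrite eqp_monic // (negbTE FG).
have [[u1 u2] /= Hu] := Bezout_eq1_coprimepP _ _ cop.
have sG : (1 < size G)%N.
  case: HG => mG nG _; case: (ltngtP (size G) 1) => // sG1.
  - by move: sG1; rewrite ltnS leqn0 size_poly_eq0 (negbTE (monic_neq0 mG)).
  - exfalso; apply: nG; move/eqP: sG1 => /size_poly1P [c _ ->].
    exact: fixed_const i.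
move=> E; have := congr1 (fun f => f (u1 * F)) E => /=.
rewrite /mu_inf modp_mull.
have -> : (u1 * F) %% G = 1%:P.
  have -> : u1 * F = 1 - u2 * G by rewrite -Hu addrK.
  by rewrite modpD modpN modp_mull oppr0 addr0 modp_small // size_polyC oner_eq0.
rewrite (@nu_v_const _ _ _ _ _ _ _ 0 None i1) //; last first.
  by move=> k _; rewrite /nu_i vag_zero.
rewrite (@nu_v_const _ _ _ _ _ _ _ 1%:P (addo (v 1) (Some 0)) i1) //; last first.
  by move=> k _; rewrite /nu_i vag_const ?oner_eq0.
case: Hv => H0 _ _; case E1: (v 1) => [g|] //= _.
by move: (proj1 (H0 1) E1) => /eqP; rewrite oner_eq0.
Qed.
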